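(* Let $n\ge 2$. Then $\mathrm{B}=\Gamma^{\overline{03}}=\Gamma^{\overline{12}}$, where for a subspace $L\subseteq\mathrm{C}$ we write $\Gamma^{L}=\{T\in\mathrm{C}^\times: T L T^{-1}\subseteq L\}$.
   Context: Let $\mathrm{C}$ be either the real Clifford algebra $C\ell_{p,q}$ with $p+q=n$, or the complex Clifford algebra $C\ell(\mathbb{C}^n)$. It has identity $e$ and generators $e_1,\dots,e_n$ satisfying $e_ae_b+e_be_a=2\eta_{ab}e$. In the real case $\eta=\mathrm{diag}(1,\dots,1,-1,\dots,-1)$ with $p$ entries $+1$ and $q$ entries $-1$. In the complex case $\eta=I_n$. $\mathrm{C}^k$ is the grade-$k$ subspace, spanned by the products $e_{a_1}\cdots e_{a_k}$ with $a_1<\dots<a_k$. The grade involution $U\mapsto\hat U$ is the linear automorphism acting on $\mathrm{C}^k$ as $(-1)^k$. The reversion $U\mapsto\tilde U$ is the linear anti-automorphism acting on $\mathrm{C}^k$ as $(-1)^{k(k-1)/2}$. For $m=0,1,2,3$ let $\mathrm{C}^{\overline m}=\bigoplus_{k\equiv m \pmod 4}\mathrm{C}^k$, and $\mathrm{C}^{\overline{kl}}=\mathrm{C}^{\overline k}\oplus\mathrm{C}^{\overline l}$. $\Gamma^{\overline{kl}}$ denotes $\Gamma^L$ with $L=\mathrm{C}^{\overline{kl}}$. $\mathrm{C}^\times$ is the group of invertible elements. $\mathrm{Z}$ is the center: $\mathrm{Z}=\mathrm{C}^0$ for $n$ even and $\mathrm{Z}=\mathrm{C}^0\oplus\mathrm{C}^n$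 for $n$ odd. $\mathrm{Z}^\times$ is the set of invertible elements of $\mathrm{Z}$. Define $\mathrm{B}:=\{T\in\mathrm{C}^\times:\ \hat{\tilde T} T\in\mathrm{Z}^\times\}$. *)

(* Defs.v *)
From HB Require Import structures.
From mathcomp Require Import all_boot all_order all_algebra.
From mathcomp Require Import reals.
From mathcomp Require Import complex.
Set Implicit Arguments. Unset Strict Implicit. Unset Printing Implicit Defensive.
Import Order.TTheory GRing.Theory Num.Theory.
Local Open Scope ring_scope.

(* Explicit model of the Clifford algebra with diagonal metric eta over a field K:
   an element is its coordinate vector in the basis e_A, A ranging over subsets
   of {0,..,n-1} (e_A = e_{a1}...e_{ak}, a1<...<ak; e_set0 = identity e).     *)
Section Clifford.
Variables (K : fieldType) (n : nat) (eta : 'I_n -> K).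

Definition clif := {ffun {set 'I_n} -> K}.

Definition cl_invs (A B : {set 'I_n}) : nat :=
  #|[set ab : 'I_n * 'I_n | (ab.1 \in A) && (ab.2 \in B) && (ab.2 < ab.1)%N]|.

(* e_A e_B = cl_coef A B * e_(A symmetric-difference B) *)
Definition cl_coef (A B : {set 'I_n}) : K :=
  (-1) ^+ cl_invs A B * \prod_(i in A :&: B) eta i.

Definition cl_mul (x y : clif) : clif :=
  [ffun C => \sum_(A : {set 'I_n}) \sum_(B : {set 'I_n} | (A :|: B) :\: (A :&: B) == C)
      cl_coef A B * x A * y B].

Definition cl_one : clif := [ffun A : {set 'I_n} => if A == set0 then 1 else 0].

Definition cl_unit (x : clif) : Prop :=
  exists y, cl_mul x y = cl_one /\ cl_mul y x = cl_one.

Definition cl_hat (x : clif) : clif := [ffun A : {set 'I_n} => (-1) ^+ #|A| * x A].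
Definition cl_rev (x : clif) : clif :=
  [ffun A : {set 'I_n} => (-1) ^+ ((#|A| * (#|A|).-1) %/ 2) * x A].

Definition cl_bar2 (k l : nat) (x : clif) : Prop :=
  forall A : {set 'I_n}, x A != 0 -> (#|A| %% 4 == k)%N || (#|A| %% 4 == l)%N.

Definition cl_Z (x : clif) : Prop :=
  forall A : {set 'I_n}, x A != 0 -> (A == set0) || (odd n && (A == setT)).

Definition cl_Zunit (x : clif) : Prop :=
  cl_Z x /\ exists y, cl_Z y /\ cl_mul x y = cl_one /\ cl_mul y x = cl_one.

Definition cl_B (T : clif) : Prop :=
  cl_unit T /\ cl_Zunit (cl_mul (cl_hat (cl_rev T)) T).

Definition cl_Gamma (L : clif -> Prop) (T : clif) : Prop :=
  exists Tinv, cl_mul T Tinv = cl_one /\ cl_mul Tinv T = cl_one /\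
    forall X, L X -> L (cl_mul (cl_mul T X) Tinv).

End Clifford.

Definition eta_pq (R : realType) (p q : nat) (i : 'I_(p + q)) : R :=
  if (i < p)%N then 1 else -1.
Arguments eta_pq : clear implicits.

(* Main.v *)
Require Import Defs.
From HB Require Import structures.
From mathcomp Require Import all_boot all_order all_algebra.
From mathcomp Require Import reals complex.
From mathcomp Require Import zify ring.
Import Order.TTheory GRing.Theory Num.Theory.
Set Implicit Arguments. Unset Strict Implicit. Unset Printing Implicit Defensive.
Local Open Scope ring_scope.

Ltac bcase := repeat match goal with
  | |- context [?x \in ?A] => case: (x \in A)
  | |- context [(?x < ?y)%N] => case: (x < y)%N end.

Section Gen.
Variables (K : fieldType) (n : nat) (eta : 'I_n -> K).


Local Notation S := {set 'I_n}.
Definition sd (A B : S) := (A :|: B) :\: (A :&: B).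
Definition ind (b : bool) (x : K) := if b then x else 1.
Definition sgp (A B : S) := \prod_(i : 'I_n) \prod_(j : 'I_n)
   ind [&& i \in A, j \in B & (j < i)%N] (-1).
Definition etp (A B : S) := \prod_i ind (i \in A :&: B) (eta i).

Lemma coefE A B : cl_coef eta A B = sgp A B * etp A B.
Proof.
rewrite /cl_coef /cl_invs /sgp /etp; congr (_ * _).
  rewrite -prodr_const big_mkcond pair_bigA /=; apply: eq_bigr => -[i j] _.
  by rewrite /ind inE /= andbA.
by rewrite big_mkcond; apply: eq_bigr => i _.
Qed.

Lemma sdE A B x : (x \in sd A B) = (x \in A) (+) (x \in B).
Proof. by rewrite !inE; bcase. Qed.

Lemma sdK A B : sd A (sd A B) = B.
Proof. by apply/setP => x; rewrite !sdE; bcase. Qed.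
Lemma sdC A B : sd A B = sd B A.
Proof. by apply/setP => x; rewrite !sdE; bcase. Qed.
Lemma sdA A B C : sd (sd A B) C = sd A (sd B C).
Proof. by apply/setP => x; rewrite !sdE; bcase. Qed.
Lemma sd0 A : sd set0 A = A.
Proof. by apply/setP => x; rewrite !sdE inE. Qed.
Lemma sdxx A : sd A A = set0.
Proof. by apply/setP => x; rewrite !sdE inE; bcase. Qed.
Lemma sd_inj C : injective (fun A => sd A C).
Proof. by move=> A B /= h; rewrite -(sdK C A) -(sdK C B) !(sdC C) h. Qed.

Lemma coef_assoc A B C :
  cl_coef eta A B * cl_coef eta (sd A B) C =
  cl_coef eta A (sd B C) * cl_coef eta B C.
Proof.
rewrite !coefE mulrACA [RHS]mulrACA; congr (_ * _).
  rewrite /sgp -!big_split; apply: eq_bigr => i _; rewrite -!big_split.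
  apply: eq_bigr => j _; rewrite /ind !sdE; bcase => //=;
  by rewrite ?mulrNN ?mulr1 ?mul1r.
rewrite /etp -!big_split; apply: eq_bigr => i _ /=; rewrite /ind !inE.
by bcase => //=; rewrite ?mulr1 ?mul1r.
Qed.




Local Notation coef := (cl_coef eta).

Lemma prod_ind (T : finType) (P : pred T) (x : K) :
  \prod_i ind (P i) x = x ^+ #|P|.
Proof. rewrite -prodr_const [RHS]big_mkcond. apply: eq_bigr => i _. by []. Qed.

Lemma etpC A B : etp A B = etp B A.
Proof. by rewrite /etp setIC. Qed.

Lemma sgpC (A B : S) : sgp B A =
  (-1) ^+ (#|A| * #|B| + #|A :&: B|) * sgp A B :> K.
Proof.
rewrite /sgp exchange_big /=.
transitivity (\prod_i \prod_j (ind ((i \in A) && (j \in B)) (-1) *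
   ind [&& i \in A, j \in B & i == j] (-1) *
   ind [&& i \in A, j \in B & (j < i)%N] (-1)) : K).
  apply: eq_bigr => i _; apply: eq_bigr => j _.
  rewrite /ind -val_eqE /=; case: (ltngtP i j) => _;
  by bcase; rewrite /= ?mulrNN ?mulr1 ?mul1r ?mulN1r ?opprK.
under eq_bigr => i _ do rewrite big_split /=.
rewrite big_split /=; congr (_ * _).
under eq_bigr => i _ do rewrite big_split /=.
rewrite exprD big_split /=; congr (_ * _).
  transitivity (\prod_i ind (i \in A) ((-1) ^+ #|B|) : K).
    apply: eq_bigr => i _; rewrite /ind; case: (i \in A) => /=.
      by rewrite -(prod_ind (fun j => j \in B)).
    by rewrite big1.
  by rewrite (prod_ind (fun i => i \in A)) -exprM mulnC.
rewrite -(prod_ind (fun i => i \in A :&: B)); apply: eq_bigr => i _.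
rewrite (bigD1 i) //= big1 ?mulr1 => [|j /negbTE ji].
  by rewrite eqxx !andbT inE.
by rewrite eq_sym ji !andbF.
Qed.

Lemma coef_comm (A B : S) : coef B A =
  (-1) ^+ (#|A| * #|B| + #|A :&: B|) * coef A B.
Proof. by rewrite !coefE sgpC etpC mulrA. Qed.

Lemma coef_nz (A B : S) : (forall i, eta i != 0) -> coef A B != 0.
Proof.
move=> nz; rewrite coefE mulf_neq0 //.
  apply/prodf_neq0 => i _; apply/prodf_neq0 => j _.
  by rewrite /ind; case: ifP => _; rewrite ?oppr_eq0 oner_eq0.
by apply/prodf_neq0 => i _; rewrite /ind; case: ifP => _; rewrite ?oner_eq0.
Qed.

Lemma coef0l B : coef set0 B = 1.
Proof.
rewrite coefE /sgp /etp !big1 ?mulr1 // => i _; first by rewrite set0I inE.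
by rewrite big1 // => j _; rewrite inE.
Qed.

Lemma coef0r B : coef B set0 = 1.
Proof.
rewrite coefE /sgp /etp !big1 ?mulr1 // => i _; first by rewrite setI0 inE.
by rewrite big1 // => j _; rewrite inE andbF.
Qed.

Definition sigma (k : nat) : K := (-1) ^+ k * (-1) ^+ ((k * k.-1) %/ 2).

Lemma bin2D x y : 'C(x + y, 2) = ('C(x, 2) + 'C(y, 2) + x * y)%N.
Proof.
elim: y => [|y IH]; first by rewrite addn0 bin0n addn0 muln0 addn0.
rewrite addnS binS bin1 IH binS bin1 mulnS; lia.
Qed.

Lemma sigmaE k : sigma k = (-1) ^+ (k + 'C(k, 2)).
Proof. by rewrite /sigma bin2 divn2 exprD. Qed.

Lemma sign_odd_eq (x y : nat) : odd x = odd y -> (-1) ^+ x = (-1) ^+ y :> K.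
Proof. by move=> h; rewrite -signr_odd h signr_odd. Qed.

Lemma sigma_sd (A B : S) : sigma #|sd A B| *
  (-1) ^+ (#|A| * #|B| + #|A :&: B|) = sigma #|A| * sigma #|B|.
Proof.
have eA := cardsID B A; have eB := cardsID A B; rewrite setIC in eB.
have eS := cardsID A (sd A B).
have h1 : sd A B :&: A = A :\: B by apply/setP => i; rewrite !inE; bcase.
have h2 : sd A B :\: A = B :\: A by apply/setP => i; rewrite !inE; bcase.
rewrite h1 h2 in eS.
rewrite -eA -eB -eS.
move: #|A :&: B| #|A :\: B| #|B :\: A| => m a b.
rewrite !sigmaE -!exprD; apply: sign_odd_eq.
rewrite !bin2D !(oddD, oddM) /=.
by case: (odd m); case: (odd a); case: (odd b); case: (odd (binomial m 2)); case: (odd (binomial a 2)); case: (odd (binomial b 2)).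
Qed.

Lemma odd_bin2_4 q : odd 'C(q * 4, 2) = false.
Proof.
have -> : (q * 4 = q * 2 + q * 2)%N by lia.
by rewrite bin2D !(oddD, oddM) addbb /= andbF.
Qed.

Lemma sigma_mod k : sigma k =
  if (k %% 4 == 0)%N || (k %% 4 == 3)%N then 1 else -1.
Proof.
rewrite sigmaE; move: (divn_eq k 4) (ltn_pmod k (isT : (0 < 4)%N)).
move: (k %/ 4)%N (k %% 4)%N => q r -> lt4.
rewrite -signr_odd bin2D !(oddD, oddM) odd_bin2_4 /= !andbF /=.
by case: r lt4 => [|[|[|[|r]]]].
Qed.

Lemma sigma_sq k : sigma k * sigma k = 1.
Proof. by rewrite sigma_mod; case: ifP => _; rewrite ?mulrNN ?mulr1. Qed.

Lemma sign_sq k : (-1) ^+ k * (-1) ^+ k = 1 :> K.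
Proof. by rewrite -exprD -signr_odd addnn odd_double. Qed.

Local Notation "x ** y" := (cl_mul eta x y) (at level 40, left associativity).
Local Notation one := (cl_one K n).
Definition conj (x : clif K n) : clif K n := cl_hat (cl_rev x).
Definition scal (a : K) (x : clif K n) : clif K n := [ffun A => a * x A].
Definition eb (B : S) : clif K n := [ffun A => if A == B then 1 else 0].

Lemma mulE x y C : (x ** y) C = \sum_A coef A (sd A C) * x A * y (sd A C).
Proof.
rewrite ffunE; apply: eq_bigr => A _.
rewrite (big_pred1 (sd A C)) // => B /=.
by rewrite -/(sd A B); apply/eqP/eqP => [<-|->]; rewrite sdK.
Qed.

Lemma sd_injl A : injective (sd A).
Proof. exact: can_inj (sdK A). Qed.

Lemma sdKr A C : sd (sd A C) C = A.
Proof. by rewrite sdC (sdC A) sdK. Qed.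

Lemma mulA x y z : x ** (y ** z) = x ** y ** z.
Proof.
apply/ffunP => D; rewrite !mulE.
under eq_bigr => A _ do rewrite mulE big_distrr /=.
under [RHS]eq_bigr => B _ do rewrite mulE big_distrr big_distrl /=.
rewrite [RHS]exchange_big /=; apply: eq_bigr => A _.
rewrite [RHS](reindex_inj (@sd_injl A)) /=.
apply: eq_bigr => B _.
have e1 : sd (sd A B) D = sd B (sd A D) by apply/setP => i; rewrite !sdE; bcase.
rewrite sdK e1; set C := sd B (sd A D).
have e2 : sd A D = sd B C by rewrite /C sdK.
rewrite e2; have h := coef_assoc A B C.
transitivity (coef A (sd B C) * coef B C * (x A * y B * z C)); first by ring.
by rewrite -h; ring.
Qed.

Lemma mul1x x : one ** x = x.
Proof.
apply/ffunP => C; rewrite mulE (bigD1 set0) //= big1 => [|A nA].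
  by rewrite ffunE eqxx sd0 coef0l !mul1r ?mulr1 addr0.
by rewrite ffunE (negbTE nA) mulr0 mul0r.
Qed.

Lemma mulx1 x : x ** one = x.
Proof.
apply/ffunP => C; rewrite mulE (bigD1 C) //= big1 => [|A nA].
  by rewrite ffunE sdxx eqxx coef0r !mul1r ?mulr1 addr0.
rewrite ffunE; case: eqP => [e|]; last by rewrite mulr0.
by case/eqP: nA; apply: (@sd_inj C); rewrite /= e sdxx.
Qed.

Lemma conjE x A : conj x A = sigma #|A| * x A.
Proof. by rewrite /conj !ffunE mulrA. Qed.

Lemma conjK x : conj (conj x) = x.
Proof. by apply/ffunP => A; rewrite !conjE mulrA sigma_sq mul1r. Qed.

Lemma conj1 : conj one = one.
Proof.
apply/ffunP => A; rewrite conjE ffunE; case: eqP => [->|]; last by rewrite mulr0.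
by rewrite cards0 /sigma /= !expr0 !mulr1.
Qed.

Lemma conj_mul x y : conj (x ** y) = conj y ** conj x.
Proof.
apply/ffunP => C; rewrite conjE !mulE mulr_sumr.
rewrite [RHS](reindex_inj (@sd_inj C)) /=; apply: eq_bigr => A _.
rewrite sdKr !conjE; set B := sd A C.
have eC : C = sd A B by rewrite /B sdK.
rewrite {1}eC (coef_comm A B); have h := sigma_sd A B.
transitivity (sigma #|sd A B| * ((-1) ^+ (#|A| * #|B| + #|A :&: B|) *
   (-1) ^+ (#|A| * #|B| + #|A :&: B|)) * (coef A B * x A * y B)).
  by rewrite sign_sq; ring.
set E := (#|A| * #|B| + #|A :&: B|)%N.
transitivity (sigma #|sd A B| * (-1) ^+ E * ((-1) ^+ E * (coef A B * x A * y B))).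
  by ring.
by rewrite h; ring.
Qed.

Lemma scalE a x A : scal a x A = a * x A.
Proof. by rewrite ffunE. Qed.

Lemma mulZr a x y : x ** scal a y = scal a (x ** y).
Proof.
apply/ffunP => C; rewrite scalE !mulE mulr_sumr; apply: eq_bigr => A _.
by rewrite scalE; ring.
Qed.

Lemma mulZl a x y : scal a x ** y = scal a (x ** y).
Proof.
apply/ffunP => C; rewrite scalE !mulE mulr_sumr; apply: eq_bigr => A _.
by rewrite scalE; ring.
Qed.

Lemma conjZ a x : conj (scal a x) = scal a (conj x).
Proof. by apply/ffunP => A; rewrite !(conjE, scalE); ring. Qed.

Lemma scalA a b x : scal a (scal b x) = scal (a * b) x.
Proof. by apply/ffunP => A; rewrite !scalE mulrA. Qed.

Lemma scal1 x : scal 1 x = x.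
Proof. by apply/ffunP => A; rewrite !scalE mul1r. Qed.

Lemma mul_ebl B y C : (eb B ** y) C = coef B (sd B C) * y (sd B C).
Proof.
rewrite mulE (bigD1 B) //= big1 => [|A nA]; first by rewrite ffunE eqxx mulr1 addr0.
by rewrite ffunE (negbTE nA) mulr0 mul0r.
Qed.

Lemma mul_ebr B y C : (y ** eb B) C = coef (sd B C) B * y (sd B C).
Proof.
rewrite mulE (bigD1 (sd B C)) //= big1 => [|A nA].
  by rewrite ffunE sdKr eqxx mulr1 addr0 mulrC.
rewrite ffunE; case: eqP => [e|]; last by rewrite mulr0.
by case/eqP: nA; rewrite -e sdKr.
Qed.

Lemma Z_central w x : cl_Z w -> w ** x = x ** w.
Proof.
move=> Zw; apply/ffunP => C; rewrite !mulE.
rewrite [RHS](reindex_inj (@sd_inj C)) /=; apply: eq_bigr => A _.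
rewrite sdKr; have [->|wA] := eqVneq (w A) 0; first by rewrite !(mulr0, mul0r).
have e : coef (sd A C) A = coef A (sd A C).
  rewrite coef_comm -signr_odd.
  case/orP: (Zw A wA) => [/eqP->|/andP [on /eqP->]].
    by rewrite cards0 set0I cards0 /= expr0 mul1r.
  rewrite cardsT card_ord setTI !(oddD, oddM) on /=.
  by case: (odd _); rewrite expr0 mul1r.
by rewrite e; ring.
Qed.


Lemma double0 (a : K) : (2 : K) != 0 -> a = - a -> a = 0.
Proof.
move=> two e; apply/eqP; have : a * 2 == 0.
  have -> : a * 2 = a - - a by ring.
  by rewrite -e subrr.
by rewrite mulf_eq0 (negbTE two) orbF.
Qed.

Lemma comm_eb0 y (B D : S) : (forall i, eta i != 0) -> (2 : K) != 0 ->
  eb B ** y = y ** eb B -> ((#|B| * #|D| + #|B :&: D|) %% 2 = 1)%N ->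
  y D = 0.
Proof.
move=> nz two h od; have hodd : odd (#|B| * #|D| + #|B :&: D|).
  by move: od; rewrite modn2; case: (odd _).
move/(congr1 (fun f : clif K n => f (sd B D))): h.
rewrite mul_ebl mul_ebr sdK (coef_comm B D) -signr_odd hodd expr1 => e.
have : coef B D * y D = 0.
  by apply: double0 => //; rewrite {1}e mulN1r mulNr.
by move/eqP; rewrite mulf_eq0 (negbTE (coef_nz _ _ nz)) /= => /eqP.
Qed.


Hypothesis nz : forall i, eta i != 0.
Hypothesis two : (2 : K) != 0.

Lemma main_gen (k l : nat) (eps : K) (cls : nat -> bool) :
  eps * eps = 1 ->
  (forall X, cl_bar2 k l X <-> conj X = scal eps X) ->
  (forall B : S, cls #|B| -> cl_bar2 k l (eb B)) ->
  (forall y, conj y = y -> (forall B : S, cls #|B| -> eb B ** y = y ** eb B) ->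
      cl_Z y) ->
  forall T, cl_B eta T <-> cl_Gamma eta (cl_bar2 k l) T.
Proof.
move=> ee HL Heb Hkey T; split.
- case=> -[Ti [h1 h2]] [Zz [w [Zw [zw wz]]]].
  rewrite -/(conj T) in Zz zw wz.
  set z := conj T ** T in Zz zw wz.
  have cz : conj z = z by rewrite /z conj_mul conjK.
  have cw : conj w = w.
    by rewrite -[LHS]mulx1 -zw mulA -[X in conj w ** X]cz -conj_mul zw conj1 mul1x.
  have cT : conj T = z ** Ti by rewrite /z -mulA h1 mulx1.
  have eTi : Ti = w ** conj T by rewrite cT mulA wz mul1x.
  have cTi : conj Ti = T ** w by rewrite eTi conj_mul conjK cw.
  exists Ti; split; [done | split; [done|]].
  move=> X /HL cX; apply/HL.
  rewrite !conj_mul cX cTi cT mulZl mulZr.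
  congr (scal eps _).
  rewrite -!mulA (mulA w X) (Z_central X Zw) h1 mulx1 cT -(mulA X) (mulA w) wz mul1x.
  done.
- case=> Ti [h1 [h2 hL]]; split; first by exists Ti.
  change (cl_hat (cl_rev T)) with (conj T).
  set cT := conj T; set z := cT ** T; set w := Ti ** conj Ti.
  have cTcTi : cT ** conj Ti = one by rewrite /cT -conj_mul h2 conj1.
  have cTicT : conj Ti ** cT = one by rewrite /cT -conj_mul h1 conj1.
  have zw : z ** w = one by rewrite /z /w mulA -(mulA cT) h1 mulx1.
  have wz : w ** z = one.
    by rewrite /z /w mulA -(mulA Ti) cTicT mulx1 h2.
  have cz : conj z = z by rewrite /z conj_mul conjK.
  have cw : conj w = w by rewrite /w conj_mul conjK.
  have comm : forall X, cl_bar2 k l X -> z ** X = X ** z.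
    move=> X LX; have := hL X LX; move/HL; move: LX => /HL cX.
    rewrite !conj_mul cX mulZl mulZr => e.
    have e' : conj Ti ** (X ** cT) = T ** X ** Ti.
      by rewrite -[LHS]scal1 -ee -scalA e scalA ee scal1.
    rewrite -[z ** X]mulx1 -h2 /z !mulA -(mulA cT) -(mulA cT) -e'.
    by rewrite !mulA cTcTi mul1x -mulA.
  have commw : forall X, cl_bar2 k l X -> w ** X = X ** w.
    move=> X LX; rewrite -[w ** X]mulx1 -zw mulA -(mulA w) -comm //.
    by rewrite mulA wz mul1x.
  split.
    apply: Hkey => // B hB; exact: esym (comm _ (Heb _ hB)).
  exists w; split.
    apply: Hkey => // B hB; exact: esym (commw _ (Heb _ hB)).
  by [].
Qed.


Lemma subset_card (D : S) k : (k <= #|D|)%N -> exists B : S, B \subset D /\ #|B| = k.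
Proof.
elim: k => [|k IH] lek; first by exists set0; rewrite sub0set cards0.
have [B [sBD cB]] := IH (ltnW lek).
have /set0Pn [x] : D :\: B != set0.
  by rewrite -card_gt0 cardsD (setIidPr sBD) cB subn_gt0.
rewrite inE => /andP [xB xD].
exists (x |: B); split; first by rewrite subUset sub1set xD sBD.
by rewrite cardsU1 xB cB.
Qed.

Lemma notT (D : S) : D != setT -> exists x, x \notin D.
Proof.
move=> DT; apply/existsP; apply: contraR DT; rewrite negb_exists => /forallP h.
by apply/eqP/setP => x; rewrite inE; have := h x; rewrite negbK.
Qed.

Lemma cardT : #|[set: 'I_n]| = n.
Proof. by rewrite cardsT card_ord. Qed.

Lemma bar2E k l eps (cls : nat -> bool) :
  (forall c, cls c = ((c %% 4 == k) || (c %% 4 == l))%N) ->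
  (forall c, sigma c = if cls c then eps else - eps) ->
  eps != - eps ->
  forall X, cl_bar2 k l X <-> conj X = scal eps X.
Proof.
move=> hc hs he X; split.
- move=> h; apply/ffunP => A; rewrite conjE scalE hs.
  have [->|XA] := eqVneq (X A) 0; first by rewrite !mulr0.
  by rewrite hc (h A XA).
- move=> h A XA; rewrite -hc; apply/negPn/negP => nc.
  have := congr1 (fun f : clif K n => f A) h; rewrite /= conjE scalE hs (negbTE nc).
  move=> e; have : (eps + eps) * X A = 0 by rewrite mulrDl -{1}e mulNr addNr.
  by move/eqP; rewrite mulf_eq0 addr_eq0 (negbTE he) (negbTE XA).
Qed.

Lemma ebE k l (cls : nat -> bool) :
  (forall c, cls c = ((c %% 4 == k) || (c %% 4 == l))%N) ->
  forall B : S, cls #|B| -> cl_bar2 k l (eb B).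
Proof.
move=> hc B hB A; rewrite ffunE; have [->|nAB] := eqVneq A B.
  by rewrite -hc.
by rewrite eqxx.
Qed.

Definition cls03 c := ((c %% 4 == 0) || (c %% 4 == 3))%N.
Definition cls12 c := ((c %% 4 == 1) || (c %% 4 == 2))%N.

Lemma one_nneg : (1 : K) != - 1.
Proof.
apply: contra two; rewrite -addr_eq0 => /eqP h.
by rewrite -[2%:R]/(1 *+ 2) mulr2n h.
Qed.

Lemma bar03 X : cl_bar2 0 3 X <-> conj X = scal 1 X.
Proof.
apply: (@bar2E _ _ _ cls03) => //; last exact: one_nneg.
by move=> c; rewrite sigma_mod.
Qed.

Lemma bar12 X : cl_bar2 1 2 X <-> conj X = scal (-1) X.
Proof.
apply: (@bar2E _ _ _ cls12) => //.
- move=> c; rewrite sigma_mod /cls12 opprK.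
  by have := ltn_pmod c (isT : (0 < 4)%N); case: (c %% 4)%N => [|[|[|[|?]]]].
- by rewrite opprK eq_sym one_nneg.
Qed.

Lemma key03 y : conj y = y -> (forall B : S, cls03 #|B| -> eb B ** y = y ** eb B) ->
  cl_Z y.
Proof.
move=> cy hB D yD; apply/negPn/negP => nZ.
have D0 : D != set0 by apply/eqP => D0; move/negP: nZ; apply; rewrite D0 eqxx.
have hD : cls03 #|D|.
  by have := proj2 (bar03 y); rewrite scal1 => /(_ cy) h; exact: h D yD.
move/negP: yD; apply; apply/eqP.
case/orP: hD => /eqP hD.
- have le3 : (3 <= #|D|)%N by move: D0; rewrite -card_gt0; lia.
  have [B [sBD cB]] := subset_card le3.
  apply: (@comm_eb0 y B D nz two); first by apply: hB; rewrite cB.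
  by rewrite cB (setIidPl sBD) cB; lia.
- have DT : D != setT.
    apply/eqP => DT; move/negP: nZ; apply; rewrite DT eqxx andbT; apply/orP; right.
    have : (n %% 2 = 1)%N by move: hD; rewrite DT cardT; lia.
    by rewrite modn2; case: (odd n).
  have [x xD] := notT DT.
  have le2 : (2 <= #|D|)%N by lia.
  have [B0 [sB0 cB0]] := subset_card le2.
  have xB0 : x \notin B0 by apply: contra xD; exact: (subsetP sB0).
  have cB : #|x |: B0| = 3%N by rewrite cardsU1 xB0 cB0.
  have BD : (x |: B0) :&: D = B0.
    apply/setP => u; rewrite !inE; case: eqP => [->|_] /=.
      by rewrite (negbTE xD) (negbTE xB0).
    by case uB: (u \in B0); rewrite ?(subsetP sB0 _ uB).
  apply: (@comm_eb0 y (x |: B0) D nz two); first by apply: hB; rewrite cB.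
  by rewrite cB BD cB0; lia.
Qed.

Lemma key12 y : (forall B : S, cls12 #|B| -> eb B ** y = y ** eb B) -> cl_Z y.
Proof.
move=> hB D yD; apply/negPn/negP => nZ.
have D0 : D != set0 by apply/eqP => D0; move/negP: nZ; apply; rewrite D0 eqxx.
move/negP: yD; apply; apply/eqP.
have [o|e] : (#|D| %% 2 = 1 \/ #|D| %% 2 = 0)%N by lia.
- have DT : D != setT.
    apply/eqP => DT; move/negP: nZ; apply; rewrite DT eqxx andbT; apply/orP; right.
    by move: o; rewrite DT cardT modn2; case: (odd n).
  have [x xD] := notT DT.
  have BD : [set x] :&: D = set0.
    by apply/setP => u; rewrite !inE; case: eqP => // ->; rewrite (negbTE xD).
  apply: (@comm_eb0 y [set x] D nz two); first by apply: hB; rewrite cards1.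
  by rewrite cards1 BD cards0; lia.
- have /set0Pn [x xD] := D0.
  have BD : [set x] :&: D = [set x] by apply/setIidPl; rewrite sub1set.
  apply: (@comm_eb0 y [set x] D nz two); first by apply: hB; rewrite cards1.
  by rewrite cards1 BD cards1; lia.
Qed.

Theorem gen_all T : (cl_B eta T <-> cl_Gamma eta (cl_bar2 0 3) T) /\
  (cl_B eta T <-> cl_Gamma eta (cl_bar2 1 2) T).
Proof.
split.
- apply: (@main_gen 0 3 1 cls03); first by rewrite mulr1.
  + exact: bar03.
  + by apply: ebE.
  + move=> y cy; exact: key03.
- apply: (@main_gen 1 2 (-1) cls12); first by rewrite mulrNN mulr1.
  + exact: bar12.
  + by apply: ebE.
  + move=> y _; exact: key12.
Qed.

End Gen.

Theorem mainTheorem8 :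
  (forall (R : realType) (p q : nat), (2 <= p + q)%N ->
     forall T : clif R (p + q),
       (cl_B (eta_pq R p q) T <-> cl_Gamma (eta_pq R p q) (cl_bar2 0 3) T) /\
       (cl_B (eta_pq R p q) T <-> cl_Gamma (eta_pq R p q) (cl_bar2 1 2) T)) /\
  (forall (R : realType) (n : nat), (2 <= n)%N ->
     forall T : clif R[i] n,
       (cl_B (fun _ : 'I_n => 1 : R[i]) T <->
          cl_Gamma (fun _ : 'I_n => 1 : R[i]) (cl_bar2 0 3) T) /\
       (cl_B (fun _ : 'I_n => 1 : R[i]) T <->
          cl_Gamma (fun _ : 'I_n => 1 : R[i]) (cl_bar2 1 2) T)).
Proof.
split.
- move=> R p q _ T; apply: gen_all.
  + by move=> i; rewrite /eta_pq; case: ifP => _; rewrite ?oppr_eq0 oner_eq0.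
  + by rewrite pnatr_eq0.
- move=> R n _ T; apply: gen_all.
  + by move=> i; rewrite oner_eq0.
  + by rewrite pnatr_eq0.
Qed.
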